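(* Let $\mu,\kappa>0$ and consider the energy $W(B_e)=\frac{\mu}{2}\Big(\mathrm{tr}\frac{B_e}{(\det B_e)^{1/3}}-3\Big)+\frac{\kappa}{4}\big[(\det B_e-1)-\log\det B_e\big]$ with $B_e=F_eF_e^T$, $F_e\in\mathrm{GL}^+(3)$, and let $\tau_e$ be the associated Kirchhoff stress, whose deviatoric part is $\mathrm{dev}_3\tau_e=\mu\,\mathrm{dev}_3\big(B_e/(\det B_e)^{1/3}\big)$. Then $$\big\langle F_e^{-1}(\mathrm{dev}_3\tau_e)F_e^{-T},\mathbb{1}\big\rangle=\frac{\mu}{(\det B_e)^{4/3}}\Big[3\det B_e-\frac13\,\mathrm{tr}(B_e)\,\mathrm{tr}(\mathrm{Cof}\,B_e)\Big],$$ and this quantity vanishes if and only if $B_e$ is a positive multiple of $\mathbb{1}$, i.e. if and only if $F_e\in\mathbb{R}_+\cdot\mathrm{SO}(3)$. In particular, the right-hand side of the Simo–Hughes flow rule $\frac{d}{dt}[\overline C_p^{-1}]=-\frac23\lambda\,\mathrm{tr}(B_e)\,F^{-1}\frac{\mathrm{dev}_3\tau_e}{\|\mathrm{dev}_3\tau_e\|}F^{-T}$ ($\overline C_p=C_p/(\det C_p)^{1/3}$, $\lambda>0$) in general yields $\frac{d}{dt}\det\overline C_p^{-1}\neq0$.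
   Context: $\langle X,Y\rangle=\mathrm{tr}(XY^T)$, $\|\cdot\|$ Frobenius norm, $\mathrm{dev}_3X=X-\frac13\mathrm{tr}(X)\mathbb{1}$, $\mathrm{Cof}\,X=(\det X)X^{-T}$. Kinematics: $F\in\mathrm{GL}^+(3)$, $F_p\in\mathrm{GL}^+(3)$, $F_e=FF_p^{-1}$, $C_p=F_p^TF_p$; the derivative of $\det\overline C_p^{-1}$ along the flow is $\det\overline C_p^{-1}\langle\mathbb{1},\frac{d}{dt}[\overline C_p^{-1}]\overline C_p\rangle$. *)

(* Defs.v *)
From HB Require Import structures.
From mathcomp Require Import all_boot all_order all_algebra.
Set Implicit Arguments. Unset Strict Implicit. Unset Printing Implicit Defensive.
Import Order.TTheory GRing.Theory Num.Theory.
Local Open Scope ring_scope.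

Section Defs.
Variable R : rcfType.

Fact cbrt_subproof (x : R) :
  exists2 y, 0 <= y & (if 0 <= x then y ^+ 3 == x else y == 0) : bool.
Proof.
case x_ge0: (0 <= x); last by exists 0.
have le0x1: 0 <= x + 1 by rewrite -nnegrE rpredD ?rpred1.
have [|y /andP[y_ge0 _]] := @poly_ivt R ('X^3 - x%:P) _ _ le0x1.
  rewrite !hornerE expr0n /= sub0r oppr_le0 x_ge0 /= subr_ge0.
  have h1 : 1 <= x + 1 by rewrite lerDr.
  apply: (@le_trans _ _ (x + 1)); first by rewrite lerDl ler01.
  by rewrite -{1}(expr1 (x + 1)) ler_eXnr.
by rewrite rootE !hornerE subr_eq0; exists y.
Qed.

Definition cbrt (x : R) : R := s2val (sig2W (cbrt_subproof x)).

Definition minner (X Y : 'M[R]_3) : R := \tr (X *m Y^T).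
Definition mnorm (X : 'M[R]_3) : R := Num.sqrt (minner X X).

Definition dev3 (X : 'M[R]_3) : 'M[R]_3 := X - (\tr X / 3%:R) *: 1%:M.

Definition cof (X : 'M[R]_3) : 'M[R]_3 := \det X *: (invmx X)^T.

Definition GLp (F : 'M[R]_3) : Prop := F \in unitmx /\ 0 < \det F.

Definition SO3 (Q : 'M[R]_3) : Prop := Q^T *m Q = 1%:M /\ \det Q = 1.

(* Kirchhoff stress of the energy
   W(B) = mu/2 (tr(B/(det B)^(1/3)) - 3) + kappa/4 ((det B - 1) - log det B):
   tau = mu dev_3(B/(det B)^(1/3)) + kappa/2 (det B - 1) 1. *)
Definition kirchhoff (mu kappa : R) (B : 'M[R]_3) : 'M[R]_3 :=
  mu *: dev3 ((cbrt (\det B))^-1 *: B) + (kappa / 2%:R * (\det B - 1)) *: 1%:M.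

End Defs.

(* Main.v *)
Require Import Defs.
From HB Require Import structures.
From mathcomp Require Import all_boot all_order all_algebra.
From mathcomp Require Import ring lra.
Import Order.TTheory GRing.Theory Num.Theory.
Local Open Scope ring_scope.
Set Implicit Arguments. Unset Strict Implicit.

Lemma cbrtP (R : rcfType) (x : R) : 0 < x -> 0 < cbrt x /\ cbrt x ^+ 3 = x.
Proof.
move=> hx; rewrite /cbrt; case: (sig2W _) => y /= hy0.
rewrite (ltW hx) => /eqP hy; split => //.
rewrite lt_neqAle hy0 andbT; apply/eqP => y0; move: hy; rewrite -y0 expr0n /= => h.
by move: hx; rewrite -h ltxx.
Qed.

Lemma invmxM (R : comUnitRingType) n (A B : 'M[R]_n) : A \in unitmx -> B \in unitmx ->
  invmx (A *m B) = invmx B *m invmx A.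
Proof.
move=> hA hB.
have U : A *m B \in unitmx by rewrite unitmx_mul hA hB.
have h : invmx B *m invmx A *m (A *m B) = 1%:M.
  by rewrite -mulmxA (mulmxA (invmx A)) mulVmx // mul1mx mulVmx.
by rewrite -[LHS]mul1mx -h -mulmxA mulmxV ?mulmx1.
Qed.

Lemma minner_sum (R : rcfType) (X Y : 'M[R]_3) :
  minner X Y = \sum_i \sum_j X i j * Y i j.
Proof.
rewrite /minner /mxtrace; apply: eq_bigr => i _; rewrite !mxE.
by apply: eq_bigr => j _; rewrite mxE.
Qed.

Lemma minner_ge0 (R : rcfType) (X : 'M[R]_3) : 0 <= minner X X.
Proof.
rewrite minner_sum; apply: sumr_ge0 => i _; apply: sumr_ge0 => j _.
by rewrite -expr2 sqr_ge0.
Qed.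

Lemma minner_eq0 (R : rcfType) (X : 'M[R]_3) : minner X X = 0 -> X = 0.
Proof.
rewrite minner_sum => h; apply/matrixP => i j; rewrite mxE.
have ge : forall i0 j0 : 'I_3, 0 <= X i0 j0 * X i0 j0 by move=> *; rewrite -expr2 sqr_ge0.
have hi := psumr_eq0P (fun i _ => sumr_ge0 _ (fun j _ => ge i j)) h (i:=i) isT.
have hj := psumr_eq0P (fun j _ => ge i j) hi (i:=j) isT.
by apply/eqP; rewrite -[X i j == 0]orbb -mulf_eq0 hj.
Qed.

Lemma minner_quad (R : rcfType) (s : R) (F G : 'M[R]_3) :
  minner (s *: F - G) (s *: F - G) = s ^+ 2 * minner F F - 2%:R * s * minner F G + minner G G.
Proof.
rewrite !minner_sum !big_ord_recr !big_ord0 /= !mxE; ring.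
Qed.

Lemma minner_trinv (R : rcfType) (F : 'M[R]_3) : F \in unitmx ->
  minner F (invmx F)^T = 3%:R.
Proof. by move=> hF; rewrite /minner trmxK mulmxV // mxtrace1. Qed.

Lemma mnn_pos (R : rcfType) (F : 'M[R]_3) : F \in unitmx -> 0 < minner F F.
Proof.
move=> hF; rewrite lt_neqAle minner_ge0 andbT; apply/eqP => h.
move/esym/minner_eq0: h => F0; move: hF; rewrite F0 unitmxE det0 unitr0.
by [].
Qed.

Lemma cs (R : rcfType) (F : 'M[R]_3) : F \in unitmx ->
  9%:R <= minner F F * minner (invmx F)^T (invmx F)^T /\
  (minner F F * minner (invmx F)^T (invmx F)^T = 9%:R ->
     exists t, 0 < t /\ F *m F^T = t%:M).
Proof.
move=> hF; set a := minner F F; set b := minner _ _; set G := (invmx F)^T.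
have ha := mnn_pos hF.
have a0 : a != 0 by rewrite gt_eqF.
have q := minner_quad (3%:R / a) F G.
rewrite (minner_trinv hF) -/a -/b in q.
have e : a * b - 9%:R = a * minner (3%:R / a *: F - G) (3%:R / a *: F - G).
  by rewrite q; field.
split.
  by rewrite -subr_ge0 e mulr_ge0 ?minner_ge0 // ltW.
move=> hab; have : minner (3%:R / a *: F - G) (3%:R / a *: F - G) = 0.
  by apply/eqP; move: e; rewrite hab subrr => /esym/eqP; rewrite mulf_eq0 (negbTE a0).
move/minner_eq0/eqP; rewrite subr_eq0 => /eqP hG.
exists (a / 3%:R); split; first by rewrite divr_gt0 // ltr0n.
have : F *m G^T = 1%:M by rewrite /G trmxK mulmxV.
rewrite -hG linearZ /= -scalemxAr => h.
have -> : F *m F^T = (3%:R / a)^-1 *: ((3%:R / a) *: (F *m F^T)).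
  by rewrite scalerA mulVf ?scale1r // mulf_neq0 ?invr_eq0 // pnatr_eq0.
by rewrite h scalemx1 invf_div.
Qed.

Lemma key (R : rcfType) (F : 'M[R]_3) (c mu : R) : F \in unitmx -> c != 0 ->
  minner (invmx F *m (mu *: dev3 (c^-1 *: (F *m F^T))) *m (invmx F)^T) 1%:M
  = mu / c * (3%:R - \tr (F *m F^T) * \tr ((invmx F)^T *m invmx F) / 3%:R).
Proof.
move=> hF c0.
rewrite /minner trmx1 mulmx1 [LHS]mxtrace_mulC mulmxA [LHS]mxtrace_mulC.
set M := (invmx F)^T *m invmx F.
have hBM : (F *m F^T) *m M = 1%:M.
  by rewrite /M mulmxA -(mulmxA F) -trmx_mul mulVmx // trmx1 mulmx1 mulmxV.
rewrite /dev3 -scalemxAl mulmxBl -!scalemxAl hBM mul1mx mxtraceZ linearB /= !mxtraceZ mxtrace1.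
by field.
Qed.

Lemma dev3_kir (R : rcfType) (mu kappa : R) (B : 'M[R]_3) :
  dev3 (kirchhoff mu kappa B) = mu *: dev3 ((cbrt (\det B))^-1 *: B).
Proof.
rewrite /kirchhoff; set Y := _ *: B; set k := _ * _.
rewrite /dev3 !(linearD, linearZ, linearB, linearN) /= mxtrace1.
apply/matrixP => i j; rewrite !mxE; move: (cbrt _)^-1 => ci; case: (i == j); rewrite ?mulr1n ?mulr0n; field. all: try done.
Qed.

Lemma invB (R : rcfType) (F : 'M[R]_3) : F \in unitmx ->
  invmx (F *m F^T) = (invmx F)^T *m invmx F.
Proof.
by move=> hF; rewrite invmxM ?unitmx_tr // trmx_inv.
Qed.

Lemma detB_pos (R : rcfType) (F : 'M[R]_3) : F \in unitmx -> 0 < \det (F *m F^T).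
Proof.
move=> hF; rewrite det_mulmx det_tr -expr2 lt_neqAle sqr_ge0 andbT eq_sym.
by rewrite sqrf_eq0; move: hF; rewrite unitmxE unitfE.
Qed.

Lemma vanish (R : rcfType) (F : 'M[R]_3) (mu c : R) : F \in unitmx -> mu != 0 -> c != 0 ->
  (mu / c * (3%:R - \tr (F *m F^T) * \tr ((invmx F)^T *m invmx F) / 3%:R) = 0
   <-> exists t : R, 0 < t /\ F *m F^T = t%:M).
Proof.
move=> hF mu0 c0; have [_ hcs] := cs hF; move: hcs; rewrite /minner trmxK => hcs.
split.
  move=> /eqP; rewrite mulf_eq0 mulf_eq0 invr_eq0 (negbTE mu0) (negbTE c0) /= => /eqP h.
  apply: hcs; apply/eqP; rewrite -subr_eq0; apply/eqP.
  have -> : \tr (F *m F^T) * \tr ((invmx F)^T *m invmx F) - 9%:R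
    = - 3%:R * (3%:R - \tr (F *m F^T) * \tr ((invmx F)^T *m invmx F) / 3%:R) by field.
  by rewrite h mulr0.
move=> [t [t0 ht]].
set M := (invmx F)^T *m invmx F.
have hBM : (F *m F^T) *m M = 1%:M.
  by rewrite /M mulmxA -(mulmxA F) -trmx_mul mulVmx // trmx1 mulmx1 mulmxV.
rewrite ht mul_scalar_mx in hBM.
have hM : M = t^-1 *: 1%:M.
  by rewrite -hBM scalerA mulVf ?scale1r // gt_eqF.
rewrite ht hM mxtraceZ mxtrace_scalar mxtrace1.
by field; rewrite gt_eqF.
Qed.

Lemma trmxZ (R : rcfType) (a : R) (A : 'M[R]_3) : (a *: A)^T = a *: A^T.
Proof. by apply/matrixP => i j; rewrite !mxE. Qed.

Lemma so3 (R : rcfType) (F : 'M[R]_3) : GLp F ->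
  ((exists t : R, 0 < t /\ F *m F^T = t%:M)
   <-> exists (a : R) (Q : 'M[R]_3), 0 < a /\ SO3 Q /\ F = a *: Q).
Proof.
move=> [hF hdet]; split.
  move=> [t [t0 ht]].
  set r := Num.sqrt t.
  have r0 : 0 < r by rewrite sqrtr_gt0.
  have r2 : r ^+ 2 = t by rewrite sqr_sqrtr // ltW.
  have hFt : F^T = t *: invmx F.
    by rewrite -[F^T]mul1mx -(mulVmx hF) -mulmxA ht scalar_mxC mul_scalar_mx.
  have hTF : F^T *m F = t%:M.
    by rewrite hFt -scalemxAl mulVmx // scalemx1.
  have hd : \det F = r ^+ 3.
    have e : \det F ^+ 2 = (r ^+ 3) ^+ 2.
      by rewrite expr2 -{2}det_tr -det_mulmx ht det_scalar -r2 -!exprM.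
    move/eqP: e; rewrite eqf_sqr => /orP [/eqP //|/eqP h].
    have : 0 < - r ^+ 3 by rewrite -h.
    by rewrite oppr_gt0 ltNge ltW // exprn_gt0.
  exists r, (r^-1 *: F); split => //; split; last first.
    by rewrite scalerA mulfV ?scale1r // gt_eqF.
  split.
    rewrite trmxZ -scalemxAl -scalemxAr hTF -r2.
    apply/matrixP => i j; rewrite !mxE; case: (i == j); rewrite ?mulr1n ?mulr0n ?mulr0 //.
    by field; rewrite gt_eqF.
  by rewrite detZ hd -exprMn mulVf ?expr1n // gt_eqF.
move=> [a [Q [a0 [[hQ _] ->]]]].
exists (a ^+ 2); split; first by rewrite exprn_gt0.
rewrite trmxZ -scalemxAl -scalemxAr (mulmx1C hQ) scalerA -expr2.
by rewrite scalemx1.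
Qed.

Lemma cbrt_det (R : rcfType) (F : 'M[R]_3) : F \in unitmx ->
  0 < cbrt (\det (F *m F^T)) /\ cbrt (\det (F *m F^T)) ^+ 3 = \det (F *m F^T).
Proof. by move=> hF; apply: cbrtP; apply: detB_pos. Qed.

Theorem mainTheorem15 (R : rcfType) (mu kappa : R) (hmu : 0 < mu) (hkappa : 0 < kappa) :
  (* the trace identity *)
  (forall Fe : 'M[R]_3, GLp Fe ->
     let Be := Fe *m Fe^T in
     let taue := kirchhoff mu kappa Be in
     dev3 taue = mu *: dev3 ((cbrt (\det Be))^-1 *: Be) /\
     minner (invmx Fe *m dev3 taue *m (invmx Fe)^T) 1%:M
       = mu / (cbrt (\det Be)) ^+ 4
           * (3%:R * \det Be - 3%:R^-1 * \tr Be * \tr (cof Be)))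
  /\
  (* vanishing characterisation *)
  (forall Fe : 'M[R]_3, GLp Fe ->
     let Be := Fe *m Fe^T in
     let taue := kirchhoff mu kappa Be in
     (minner (invmx Fe *m dev3 taue *m (invmx Fe)^T) 1%:M = 0
        <-> exists a : R, 0 < a /\ Be = a%:M) /\
     ((exists a : R, 0 < a /\ Be = a%:M)
        <-> exists (a : R) (Q : 'M[R]_3), 0 < a /\ SO3 Q /\ Fe = a *: Q))
  /\
  (* consequence for the Simo-Hughes flow rule: the rate
     d/dt det(Cpbar^-1) = det(Cpbar^-1) <1, d/dt[Cpbar^-1] Cpbar> is nonzero
     whenever Be is not a positive multiple of the identity *)
  (forall (F Fp : 'M[R]_3) (lam : R), GLp F -> GLp Fp -> 0 < lam ->
     let Fe := F *m invmx Fp in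
     let Be := Fe *m Fe^T in
     let taue := kirchhoff mu kappa Be in
     let Cp := Fp^T *m Fp in
     let Cpbar := (cbrt (\det Cp))^-1 *: Cp in
     let rate := (- (2%:R / 3%:R) * lam * \tr Be / mnorm (dev3 taue)) *:
                   (invmx F *m dev3 taue *m (invmx F)^T) in
     ~ (exists a : R, 0 < a /\ Be = a%:M) ->
     \det (invmx Cpbar) * minner 1%:M (rate *m Cpbar) <> 0).
Proof.
have mu0 : mu != 0 by rewrite gt_eqF.
split.
  move=> Fe [hF _] Be taue; split; first exact: dev3_kir.
  have [c0 hc3] := cbrt_det hF.
  rewrite /taue dev3_kir /Be.
  set c := cbrt _.
  rewrite key ?gt_eqF // /cof mxtraceZ mxtrace_tr invB // -hc3.
  rewrite -/c; by field; rewrite gt_eqF.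
split.
  move=> Fe GL Be taue; have [hF _] := GL; split; last exact: so3.
  have [c0 _] := cbrt_det hF.
  rewrite /taue dev3_kir /Be key ?gt_eqF //.
  exact: vanish hF mu0 (negbT (gt_eqF c0)).
move=> F Fp lam [hF _] [hFp _] hlam Fe Be taue Cp Cpbar rate hns.
have hFe : Fe \in unitmx by rewrite unitmx_mul hF unitmx_inv.
have [c0 _] := cbrt_det hFe.
set D := dev3 taue.
have hDv : minner (invmx Fe *m D *m (invmx Fe)^T) 1%:M != 0.
  apply/eqP; rewrite /D /taue dev3_kir /Be key ?gt_eqF //.
  by move/(vanish hFe mu0 (negbT (gt_eqF c0)))/hns.
have hD0 : D != 0.
  by apply: contraNneq hDv => ->; rewrite mulmx0 mul0mx /minner mul0mx mxtrace0.
have hnorm : 0 < mnorm D.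
  rewrite /mnorm sqrtr_gt0 lt_neqAle minner_ge0 andbT eq_sym.
  by apply: contraNneq hD0 => /minner_eq0 ->.
have htr : 0 < \tr Be by apply: mnn_pos.
have hCp : 0 < \det Cp by have := @detB_pos R Fp^T; rewrite trmxK unitmx_tr; apply.
have [cp0 _] := cbrtP hCp.
have hCpu : Cpbar \in unitmx.
  rewrite unitmxE unitfE /Cpbar detZ mulf_neq0 ?expf_neq0 ?invr_eq0 ?gt_eqF //.
apply/eqP; rewrite mulf_eq0 negb_or; apply/andP; split.
  by rewrite -unitfE -unitmxE unitmx_inv.
rewrite /minner mul1mx mxtrace_tr /rate /Cpbar -scalemxAl -scalemxAr !mxtraceZ.
rewrite -/D !mulf_eq0 !invr_eq0 oppr_eq0 !mulf_eq0 invr_eq0 !pnatr_eq0 (gt_eqF hlam) (gt_eqF htr) (gt_eqF hnorm) (gt_eqF cp0) /=.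
rewrite /minner trmx1 mulmx1 /Fe invmxM ?unitmx_inv // invmxK trmx_mul !mulmxA in hDv.
rewrite /Cp mulmxA mxtrace_mulC !mulmxA.
exact: hDv.
Qed.
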